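(* For any positive integer $k$, $dim_s(C_{2k+1}\times C_{2k+1})=(2k+1)(k+1)$.
   Context: $C_n$ is the cycle on $n$ vertices. The direct product $G\times H$ has vertex set $V(G)\times V(H)$, with $(a,b)$ adjacent to $(c,d)$ iff $ac\in E(G)$ and $bd\in E(H)$. For a connected graph $G$, $I_G[u,v]$ is the set of vertices lying on some shortest $u$–$v$ path; a vertex $w$ strongly resolves $u,v$ if $v\in I_G[u,w]$ or $u\in I_G[v,w]$; a strong resolving set is a set $S\subseteq V(G)$ such that every pair of vertices is strongly resolved by some vertex of $S$; $dim_s(G)$ is the minimum cardinality of a strong resolving set. *)

(* Defs.v *)
From mathcomp Require Import all_boot all_order.
Set Implicit Arguments. Unset Strict Implicit. Unset Printing Implicit Defensive.

Definition cycle_graph (n : nat) : rel 'I_n :=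
  fun i j => (val j == i.+1 %% n) || (val i == j.+1 %% n).
Arguments cycle_graph n : clear implicits.

Definition direct_prod (T1 T2 : finType) (e1 : rel T1) (e2 : rel T2)
  : rel (T1 * T2) :=
  fun x y => e1 x.1 y.1 && e2 x.2 y.2.

Section Dist.
Variables (T : finType) (e : rel T).

Definition walkn (n : nat) (x y : T) : bool :=
  [exists p : n.-tuple T, path e x p && (last x p == y)].

(* graph distance: least n with an x-y walk of length n
   (default #|T| if none, which never happens in a connected graph) *)
Definition dist (x y : T) : nat :=
  \big[minn/#|T|]_(n < #|T| | walkn n x y) n.

Definition in_interval (u v w : T) : bool :=
  [exists p : (dist u v).-tuple T,
     [&& path e u p, last u p == v & w \in u :: p]].

Definition strongly_resolves (w u v : T) : bool :=
  in_interval u w v || in_interval v w u.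

Definition strong_resolving_set (S : {set T}) : bool :=
  [forall u, forall v, (u != v) ==> [exists w in S, strongly_resolves w u v]].

Definition dim_s : nat :=
  \big[minn/#|T|]_(S : {set T} | strong_resolving_set S) #|S|.

End Dist.

Definition connected_graph (T : finType) (e : rel T) : Prop :=
  forall x y : T, exists n, walkn e n x y.

(* Main.v *)
Require Import Defs.
From mathcomp Require Import all_boot all_order zify.
Set Implicit Arguments. Unset Strict Implicit. Unset Printing Implicit Defensive.


Lemma bigmin_leq_seq (I : eqType) (r : seq I) (P : pred I) (F : I -> nat) x0 j :
  j \in r -> P j -> \big[minn/x0]_(i <- r | P i) F i <= F j.
Proof.
elim: r => [|a r IH] //; rewrite in_cons big_cons => /orP [/eqP <-|hj] hP.
  by rewrite hP geq_minl.
case: ifP => _; last exact: IH.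
exact: leq_trans (geq_minr _ _) (IH hj hP).
Qed.

Section Gen.
Variables (T : finType) (e : rel T).

Lemma walkn_seq (x : T) (s : seq T) : path e x s -> walkn e (size s) x (last x s).
Proof. move=> hp; apply/existsP; exists (in_tuple s) => /=; by rewrite hp eqxx. Qed.

Lemma walknP n (x y : T) : walkn e n x y -> exists s, [/\ size s = n, path e x s & last x s = y].
Proof. move=> /existsP [p /andP [hp /eqP hl]]; exists (val p); by rewrite size_tuple. Qed.

Lemma walkn_cat n1 n2 (x y z : T) : walkn e n1 x y -> walkn e n2 y z -> walkn e (n1 + n2) x z.
Proof.
move=> /walknP [s1 [h1 p1 l1]] /walknP [s2 [h2 p2 l2]].
have := @walkn_seq x (s1 ++ s2). rewrite cat_path p1 l1 p2 last_cat l1 l2 size_cat h1 h2. by apply.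
Qed.

Lemma dist_spec (x y : T) n : walkn e n x y -> n < #|T| -> walkn e (dist e x y) x y /\ dist e x y <= n.
Proof.
move=> hw hn. rewrite /dist.
have [h1 h2] : ((\big[minn/#|T|]_(m < #|T| | walkn e m x y) m == #|T|) ||
   ((\big[minn/#|T|]_(m < #|T| | walkn e m x y) m < #|T|) && walkn e (\big[minn/#|T|]_(m < #|T| | walkn e m x y) m) x y))
  /\ \big[minn/#|T|]_(m < #|T| | walkn e m x y) m <= n.
  split.
    apply: (big_ind (fun m => (m == #|T|) || ((m < #|T|) && walkn e m x y))).
    - by rewrite eqxx.
    - move=> a b ha hb; rewrite /minn; case: ifP => _; by [].
    - move=> i hi; by rewrite ltn_ord hi orbT.
  exact: (@bigmin_leq_seq _ _ _ (fun m : 'I_#|T| => val m) _ (Ordinal hn) (mem_index_enum _) hw).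
split => //. move: h1 => /orP [/eqP he|/andP [_ ->]] //. move: h2; rewrite he => h2. 
by move: (leq_ltn_trans h2 hn); rewrite ltnn.
Qed.

Lemma in_interval_of (u v w : T) s : size s = dist e u v -> path e u s -> last u s = v -> w \in u :: s ->
  in_interval e u v w.
Proof.
move=> hs hp hl hw. apply/existsP. have hs' : size s == dist e u v by rewrite hs.
exists (Tuple hs'). by rewrite /= hp hl eqxx hw.
Qed.

End Gen.

Section Prod.
Variables (T1 T2 : finType) (e1 : rel T1) (e2 : rel T2).

Lemma zip_path (s1 : seq T1) (s2 : seq T2) a b : size s1 = size s2 ->
  path e1 a s1 -> path e2 b s2 ->
  path (direct_prod e1 e2) (a, b) (zip s1 s2) /\ last (a, b) (zip s1 s2) = (last a s1, last b s2).
Proof.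
elim: s1 s2 a b => [|x1 s1 IH] [|x2 s2] a b //= [h] /andP [q1 p1] /andP [q2 p2].
have [-> ->] := IH _ _ _ h p1 p2. by rewrite /direct_prod /= q1 q2.
Qed.

Lemma walkn_prod n a b c d : walkn e1 n a c -> walkn e2 n b d -> walkn (direct_prod e1 e2) n (a, b) (c, d).
Proof.
move=> /walknP [s1 [h1 p1 l1]] /walknP [s2 [h2 p2 l2]].
have hs : size s1 = size s2 by rewrite h1 h2.
have [hp hl] := zip_path hs p1 p2.
have := @walkn_seq _ (direct_prod e1 e2) (a, b) (zip s1 s2).
by rewrite size_zip hs minnn h2 hl l1 l2; apply.
Qed.

Lemma walkn_proj n x y : walkn (direct_prod e1 e2) n x y -> walkn e1 n x.1 y.1 /\ walkn e2 n x.2 y.2.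
Proof.
move=> /walknP [s [hs hp hl]]. split.
- have := @walkn_seq _ e1 x.1 (map fst s). rewrite size_map hs last_map hl. apply.
  rewrite (@path_map _ _ fst e1 x s). apply: sub_path hp => u v /andP [].
  by [].
- have := @walkn_seq _ e2 x.2 (map snd s). rewrite size_map hs last_map hl. apply.
  rewrite (@path_map _ _ snd e2 x s). apply: sub_path hp => u v /andP [].
  by [].
Qed.
End Prod.


Section Cyc.
Variable N : nat.
Local Notation n := N.+1.
Local Notation C := (cycle_graph N.+1).

Definition up (i : 'I_n) : 'I_n := inord ((i + 1) %% n).
Definition dn (i : 'I_n) : 'I_n := inord ((i + N) %% n).

Lemma modDMn X c : (X + c * n) %% n = X %% n.
Proof. by rewrite addnC modnMDl. Qed.

Lemma upE i : nat_of_ord (up i) = (i + 1) %% n.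
Proof. by rewrite /up inordK // ltn_pmod. Qed.
Lemma dnE i : nat_of_ord (dn i) = (i + N) %% n.
Proof. by rewrite /dn inordK // ltn_pmod. Qed.

Lemma upE' (i : 'I_n) : nat_of_ord (up i) = if nat_of_ord i == N then 0 else i + 1.
Proof.
rewrite upE. have hi := ltn_ord i. case: eqP => [->|h].
  by rewrite addn1 modnn.
by rewrite modn_small //; lia.
Qed.

Lemma dnE' (i : 'I_n) : nat_of_ord (dn i) = if nat_of_ord i == 0 then N else i - 1.
Proof.
rewrite dnE. have hi := ltn_ord i. case: eqP => [->|h].
  by rewrite add0n modn_small.
have -> : i + N = (i - 1) + 1 * n by lia.
by rewrite modDMn modn_small //; lia.
Qed.

Lemma updn i : up (dn i) = i.
Proof. apply: val_inj => /=; rewrite upE' dnE'; have := ltn_ord i; repeat case: eqP; lia. Qed.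

Lemma up_inj : injective up.
Proof.
move=> i j h; apply: val_inj => /=; have := congr1 (@nat_of_ord _) h; rewrite !upE'.
have := ltn_ord i; have := ltn_ord j. repeat case: eqP; lia.
Qed.

Lemma C_up i : C i (up i).
Proof. by rewrite /cycle_graph /= upE addn1 eqxx. Qed.
Lemma C_dn i : C i (dn i).
Proof. by rewrite -{1}(updn i) /cycle_graph /= upE addn1 eqxx orbT. Qed.

Lemma walk_cong l (x y : 'I_n) : walkn C l x y ->
  exists p m, p + m = l /\ (x + p) %% n = (y + m) %% n.
Proof.
move=> /walknP [s [hs hp hl]]. rewrite -hs -hl {hs hl}.
elim: s x hp => [|z s IH] x /=.
  by move=> _; exists 0, 0.
move=> /andP [hxz /IH [p [m [hpm hc]]]].
move: hxz; rewrite /cycle_graph /= => /orP [/eqP hz|/eqP hx].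
- exists p.+1, m; split; first by rewrite addSn hpm.
  by rewrite -hc hz modnDml addSnnS.
- exists p, m.+1; split; first by rewrite addnS hpm.
  rewrite hx modnDml.
  have -> : z.+1 + p = (z + p) + 1 by rewrite addn1 addSn.
  have -> : last z s + m.+1 = (last z s + m) + 1 by rewrite addn1 addnS.
  by rewrite -modnDml hc modnDml.
Qed.

Lemma iter_up j (x : 'I_n) : nat_of_ord (iter j up x) = (x + j) %% n.
Proof.
elim: j => [|j IH] /=; first by rewrite addn0 modn_small.
by rewrite upE IH modnDml addn1 addnS.
Qed.

Lemma iter_dn j (x : 'I_n) : nat_of_ord (iter j dn x) = (x + N * j) %% n.
Proof.
elim: j => [|j IH] /=; first by rewrite muln0 addn0 modn_small.
by rewrite dnE IH modnDml mulnS (addnC N) addnA.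
Qed.

Lemma walk_build (G F Tt p m c d l : nat) (x y : 'I_n) :
  (G + F) %% n = x -> (G + Tt) %% n = y -> p + m = l ->
  F + p + c * n = Tt + m + d * n -> walkn C l x y.
Proof.
move=> hx hy hl he.
pose s := traject up (up x) p ++ traject dn (dn (iter p up x)) m.
have hp : path C x s.
  rewrite cat_path last_traject.
  rewrite (sub_path _ (fpath_traject up x p)) ?(sub_path _ (fpath_traject dn _ m)) //.
  - by move=> a b /eqP <-; exact: C_dn.
  - by move=> a b /eqP <-; exact: C_up.
have := walkn_seq hp. rewrite /s size_cat !size_traject hl last_cat last_traject last_traject.
suff -> : iter m dn (iter p up x) = y by [].
apply: val_inj => /=. rewrite iter_dn iter_up modnDml -hx -addnA modnDml -hy !addnA.
have key : (G + F + p + N * m) + m + c * n = (G + Tt) + m + (d + m) * n by nia.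
have : (G + F + p + N * m + m) %% n = (G + Tt + m) %% n.
  by rewrite -(modDMn _ c) key modDMn.
by move/eqP; rewrite eqn_modDr => /eqP.
Qed.
End Cyc.


Section K.
Variable k : nat.
Local Notation N := k.*2.
Local Notation n := k.*2.+1.
Local Notation C := (cycle_graph k.*2.+1).

Lemma closed_even l (x : 'I_n) : walkn C l x x -> l < n -> ~~ odd l.
Proof.
move=> /walk_cong [p [m [hpm hc]]] hl; move: hc => /eqP; rewrite eqn_modDl => /eqP.
rewrite !modn_small; lia.
Qed.

Lemma adj_odd l (x : 'I_n) : (walkn C l x (up x) \/ walkn C l (up x) x) -> l < N -> odd l.
Proof.
move=> hw hl; case: hw => /walk_cong [p [m [hpm hc]]]; move: hc; rewrite upE modnDml.
- rewrite -addnA => /eqP; rewrite eqn_modDl => /eqP. rewrite !modn_small; lia.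
- rewrite -addnA => /eqP; rewrite eqn_modDl => /eqP. rewrite !modn_small; lia.
Qed.

Lemma walk_all (x y : 'I_n) : walkn C N x y.
Proof.
have hx : (0 + x) %% n = x by rewrite add0n modn_small.
have hy : (0 + y) %% n = y by rewrite add0n modn_small.
have lx := ltn_ord x; have ly := ltn_ord y.
case: (leqP x y) => hxy.
- case: (boolP (odd (y - x))) => ho.
  + apply: (walk_build (p := (y - x)./2) (m := N - (y - x)./2) (c := 1) (d := 0) hx hy); lia.
  + apply: (walk_build (p := k + (y - x)./2) (m := k - (y - x)./2) (c := 0) (d := 0) hx hy); lia.
- case: (boolP (odd (y + n - x))) => ho.
  + apply: (walk_build (p := (y + n - x)./2) (m := N - (y + n - x)./2) (c := 0) (d := 0) hx hy); lia.
  + apply: (walk_build (p := k + (y + n - x)./2) (m := k - (y + n - x)./2) (c := 0) (d := 1) hx hy); lia.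
Qed.

End K.


Section K.
Variable k : nat.
Hypothesis hk : 0 < k.
Local Notation N := k.*2.
Local Notation n := k.*2.+1.
Local Notation C := (cycle_graph k.*2.+1).
Local Notation V := ('I_n * 'I_n)%type.
Local Notation P := (direct_prod C C).

Lemma walkP_all (u v : V) : walkn P N u v.
Proof. case: u => a b; case: v => c d; apply: walkn_prod; exact: walk_all. Qed.

Lemma cardV : #|{: V}| = n * n.
Proof. by rewrite card_prod card_ord. Qed.

Lemma dist_le (u v : V) : walkn P (dist P u v) u v /\ dist P u v <= N.
Proof. apply: dist_spec (walkP_all u v) _; rewrite cardV; nia. Qed.

Definition tadj (u w : V) : bool :=
  ((u.2 == w.2) && ((w.1 == up u.1) || (u.1 == up w.1))) ||
  ((u.1 == w.1) && ((w.2 == up u.2) || (u.2 == up w.2))).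

Lemma tadj_sym u w : tadj u w = tadj w u.
Proof. by rewrite /tadj (eq_sym u.2 w.2) (eq_sym u.1 w.1) (orbC (w.1 == _)) (orbC (w.2 == _)). Qed.

Lemma far (u w : V) l : tadj u w -> walkn P l u w -> N <= l.
Proof.
move=> ht /walkn_proj [h1 h2]; rewrite leqNgt; apply/negP => hl.
case/orP: ht => /andP [/eqP he /orP ho].
- move: h2; rewrite he => h2. have hev : ~~ odd l by apply: closed_even h2 _; lia.
  suff : odd l by rewrite (negbTE hev).
  apply: (@adj_odd k l (if w.1 == up u.1 then u.1 else w.1)) => //.
  case: ho => /eqP ho.
  + by rewrite ho eqxx -ho; left.
  + case: eqP => [hh|_]; last by rewrite -ho; right.
    by rewrite -hh; left.
- move: h1; rewrite he => h1. have hev : ~~ odd l by apply: closed_even h1 _; lia.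
  suff : odd l by rewrite (negbTE hev).
  apply: (@adj_odd k l (if w.2 == up u.2 then u.2 else w.2)) => //.
  case: ho => /eqP ho.
  + by rewrite ho eqxx -ho; left.
  + case: eqP => [hh|_]; last by rewrite -ho; right.
    by rewrite -hh; left.
Qed.

Lemma dist_far (u w : V) : tadj u w -> dist P u w = N.
Proof.
move=> ht; have [hw hd] := dist_le u w; have := far ht hw; lia.
Qed.

Lemma res_self1 (u v : V) : strongly_resolves P u u v.
Proof.
apply/orP; right. have [/walknP [s [hs hp hl]] _] := dist_le v u.
by apply: (in_interval_of hs hp hl); rewrite -{1}hl mem_last.
Qed.

Lemma res_self2 (u v : V) : strongly_resolves P v u v.
Proof.
apply/orP; left. have [/walknP [s [hs hp hl]] _] := dist_le u v.
by apply: (in_interval_of hs hp hl); rewrite -{1}hl mem_last.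
Qed.

Lemma interval_tadj (u v w : V) : tadj u v -> u != v -> in_interval P u w v -> w = v.
Proof.
move=> ht huv /existsP [p /and3P [hp /eqP hl hv]].
move: hv; rewrite in_cons eq_sym (negbTE huv) /= => hv.
have hs := size_tuple p. have [_ hd] := dist_le u w.
move: hp hl hs; case/splitPr: hv => p1 p2.
rewrite cat_path /= => /and3P [hp1 he hp2] hl hs.
have hr : path P u (rcons p1 v) by rewrite rcons_path hp1 he.
have := walkn_seq hr; rewrite last_rcons => /(far ht); rewrite size_rcons => hN.
move: hl hs; case: p2 {hp2} => [|z p2] /=.
  by rewrite last_cat.
rewrite size_cat /= => _ hs. have : size p1 + (size p2).+2 <= N by rewrite hs; exact: hd.
move=> H. have := leq_trans H hN. by rewrite addnS ltnS -[X in _ <= X]addn0 leq_add2l.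
Qed.

Lemma resolve_tadj (u v w : V) : tadj u v -> u != v -> strongly_resolves P w u v -> w = u \/ w = v.
Proof.
move=> ht huv /orP [h|h].
- right; exact: (interval_tadj ht huv h).
- left; have ht' : tadj v u by rewrite tadj_sym.
  have huv' : v != u by rewrite eq_sym.
  exact: (interval_tadj ht' huv' h).
Qed.

End K.


Section K.
Variable k : nat.
Hypothesis hk : 0 < k.
Local Notation N := k.*2.
Local Notation n := k.*2.+1.
Local Notation C := (cycle_graph k.*2.+1).
Local Notation V := ('I_n * 'I_n)%type.
Local Notation P := (direct_prod C C).

Definition leg F Tt l := exists p m c d, p + m = l /\ F + p + c * n = Tt + m + d * n.

Lemma leg_walk G F Tt l (x y : 'I_n) : (G + F) %% n = x -> (G + Tt) %% n = y -> leg F Tt l -> walkn C l x y.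
Proof. move=> hx hy [p [m [c [d [h1 h2]]]]]; exact: walk_build hx hy h1 h2. Qed.

Definition absr b := if b <= k then b else n - b.

Lemma leg_other b l : b <= N -> absr b <= l -> absr b <= N - l -> l <= N -> odd l = odd (absr b) ->
  leg 0 b l /\ leg b 0 (N - l).
Proof.
rewrite /absr => hb; case: (leqP b k) => hbk h2 h3 h4 h5.
- split.
  + exists (b + (l - b)./2), ((l - b)./2), 0, 0; lia.
  + exists ((N - l - b)./2), (b + (N - l - b)./2), 0, 0; lia.
- split.
  + exists ((l - (n - b))./2), (n - b + (l - (n - b))./2), 1, 0; lia.
  + exists (n - b + (N - l - (n - b))./2), ((N - l - (n - b))./2), 0, 1; lia.
Qed.

Lemma main_choice a b : a <= N -> b <= N -> 1 <= a -> absr b <= absr a ->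
  exists e l, [/\ (e = 1 \/ e = N), l <= N, leg 0 a l, leg a e (N - l) & leg 0 b l /\ leg b 0 (N - l)].
Proof.
move=> ha hb ha1 hab.
case: (boolP (odd a == odd (absr b))) => /eqP hpar.
- exists N, a; split => //; first by right.
  + exists a, 0, 0, 0; lia.
  + exists (N - a), 0, 0, 0; lia.
  + apply: leg_other => //; move: hab hpar; rewrite /absr; case: (leqP a k); case: (leqP b k); lia.
- exists 1, (n - a); split => //; first by left.
  + lia.
  + exists 0, (n - a), 1, 0; lia.
  + exists 0, (a - 1), 0, 0; lia.
  + apply: leg_other => //; move: hab hpar; rewrite /absr; case: (leqP a k); case: (leqP b k); lia.
Qed.

Lemma interval_of_walks (u v w : V) l1 l2 : walkn P l1 u v -> walkn P l2 v w -> l1 + l2 = dist P u w ->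
  in_interval P u w v.
Proof.
move=> /walknP [s1 [h1 p1 e1]] /walknP [s2 [h2 p2 e2]] hd.
apply: (@in_interval_of _ _ _ _ _ (s1 ++ s2)).
- by rewrite size_cat h1 h2.
- by rewrite cat_path p1 e1 p2.
- by rewrite last_cat e1 e2.
- by rewrite -cat_cons mem_cat -{1}e1 mem_last.
Qed.

Lemma modself (x : 'I_n) : (x + 0) %% n = x.
Proof. by rewrite addn0 modn_small. Qed.

Lemma key (u v : V) : u != v -> exists w, tadj u w /\ in_interval P u w v.
Proof.
case: u v => x1 x2 [y1 y2] huv.
pose a := if x1 <= y1 then y1 - x1 else y1 + n - x1.
pose b := if x2 <= y2 then y2 - x2 else y2 + n - x2.
have lx1 := ltn_ord x1; have ly1 := ltn_ord y1; have lx2 := ltn_ord x2; have ly2 := ltn_ord y2.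
have haN : a <= N by rewrite /a; case: (leqP x1 y1); lia.
have hbN : b <= N by rewrite /b; case: (leqP x2 y2); lia.
have hN1 : (N == 1) = false by lia.
have ha : (x1 + a) %% n = y1.
  rewrite /a; case: (leqP x1 y1) => h.
    by rewrite subnKC // modn_small.
  have -> : x1 + (y1 + n - x1) = y1 + 1 * n by lia.
  by rewrite modDMn modn_small.
have hb : (x2 + b) %% n = y2.
  rewrite /b; case: (leqP x2 y2) => h.
    by rewrite subnKC // modn_small.
  have -> : x2 + (y2 + n - x2) = y2 + 1 * n by lia.
  by rewrite modDMn modn_small.
case: (leqP (absr b) (absr a)) => hab.
- have a1 : 1 <= a.
    case: (posnP a) => // a0.
    have b0 : b = 0 by clear ha hb; move: hab; rewrite a0 /absr /=; case: (leqP b k); lia.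
    have e1 : y1 = x1 by apply: val_inj; rewrite /= -ha a0 addn0 modn_small.
    have e2 : y2 = x2 by apply: val_inj; rewrite /= -hb b0 addn0 modn_small.
    by move: huv; rewrite e1 e2 eqxx.
  have [e [l [he hl l1 l2 [l3 l4]]]] := main_choice haN hbN a1 hab.
  exists ((if e == 1 then up x1 else dn x1), x2).
  have ht : tadj (x1, x2) ((if e == 1 then up x1 else dn x1), x2).
    rewrite /tadj /= eqxx /=; case: ifP => _; first by rewrite eqxx.
    by rewrite updn eqxx orbT.
  split => //.
  apply: (@interval_of_walks _ (y1, y2) _ l (N - l)); last by rewrite (dist_far hk ht); clear ha hb; lia.
  + apply: walkn_prod; [exact: leg_walk (modself x1) ha l1 | exact: leg_walk (modself x2) hb l3].
  + apply: walkn_prod; last exact: leg_walk hb (modself x2) l4.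
    case: he => he; subst e.
    * exact: leg_walk ha (esym (upE x1)) l2.
    * rewrite hN1. exact: leg_walk ha (esym (dnE x1)) l2.
- have b1 : 1 <= b by clear ha hb; move: hab; rewrite /absr; case: (leqP a k); case: (leqP b k); lia.
  have hba : absr a <= absr b by clear ha hb; lia.
  have [e [l [he hl l1 l2 [l3 l4]]]] := main_choice hbN haN b1 hba.
  exists (x1, (if e == 1 then up x2 else dn x2)).
  have ht : tadj (x1, x2) (x1, (if e == 1 then up x2 else dn x2)).
    rewrite /tadj /= eqxx /= orbC; case: ifP => _; first by rewrite eqxx.
    by rewrite updn eqxx orbT.
  split => //.
  apply: (@interval_of_walks _ (y1, y2) _ l (N - l)); last by rewrite (dist_far hk ht); clear ha hb; lia.
  + apply: walkn_prod; [exact: leg_walk (modself x1) ha l3 | exact: leg_walk (modself x2) hb l1].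
  + apply: walkn_prod; first exact: leg_walk ha (modself x1) l4.
    case: he => he; subst e.
    * exact: leg_walk hb (esym (upE x2)) l2.
    * rewrite hN1. exact: leg_walk hb (esym (dnE x2)) l2.
Qed.

End K.


Lemma card_rows (T1 T2 : finType) (S : {set T1 * T2}) :
  #|S| = \sum_(b : T2) #|[set x | (x, b) \in S]|.
Proof.
rewrite -sum1_card big_mkcond /=.
rewrite (eq_big (fun u : T1 * T2 => predT u.1 && predT u.2)
   (fun u : T1 * T2 => (fun x b => if (x, b) \in S then 1 else 0) u.1 u.2)) //; last by case.
rewrite -(pair_big predT predT (fun x b => if (x, b) \in S then 1 else 0)) /= exchange_big.
apply: eq_bigr => b _; rewrite -sum1_card [RHS]big_mkcond /=; apply: eq_bigr => x _; by rewrite inE.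
Qed.

Lemma sum_even k : \sum_(0 <= i < k.*2.+1) (~~ odd i : nat) = k.+1.
Proof.
elim: k => [|k IH]; first by rewrite big_nat1.
rewrite doubleS big_nat_recr //= big_nat_recr //= IH /=.
have -> : odd k.*2 = false by rewrite odd_double.
by rewrite addn1 addn0.
Qed.

Lemma card_even k : #|[set i : 'I_k.*2.+1 | ~~ odd i]| = k.+1.
Proof.
rewrite -sum1_card big_mkcond /= -(sum_even k) big_mkord /=.
apply: eq_bigr => i _; rewrite inE; by case: (odd i).
Qed.

Section K.
Variable k : nat.
Hypothesis hk : 0 < k.
Local Notation N := k.*2.
Local Notation n := k.*2.+1.
Local Notation C := (cycle_graph k.*2.+1).
Local Notation V := ('I_n * 'I_n)%type.
Local Notation P := (direct_prod C C).

Lemma upV (x : 'I_n) : (nat_of_ord x = N /\ nat_of_ord (up x) = 0) \/ (x < N /\ nat_of_ord (up x) = x + 1).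
Proof. rewrite upE'; have := ltn_ord x; case: eqP => h; lia. Qed.

Lemma up_neq (x : 'I_n) : up x != x.
Proof. apply/eqP => /(congr1 (@nat_of_ord _)); have := upV x; lia. Qed.

Lemma srs_cover (S : {set V}) : strong_resolving_set P S -> forall x b, ((x, b) \in S) || ((up x, b) \in S).
Proof.
move=> /forallP h x b. have /forallP h2 := h (x, b).
have neq : (x, b) != (up x, b) by apply/eqP => -[] /esym /eqP; rewrite (negbTE (up_neq x)).
have ht : tadj (x, b) (up x, b) by rewrite /tadj /= !eqxx.
move: (h2 (up x, b)); rewrite neq /= => /existsP [w /andP [hw hr]].
by case: (resolve_tadj hk ht neq hr) => <-; rewrite hw ?orbT.
Qed.

Lemma row_lb (S : {set V}) b : (forall x, ((x, b) \in S) || ((up x, b) \in S)) ->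
  k.+1 <= #|[set x | (x, b) \in S]|.
Proof.
move=> hc. set R := [set x | (x, b) \in S]. set Cc := ~: R.
have disj : Cc :&: ((@up N) @: Cc) = set0.
  apply/setP => y; rewrite !inE; apply/negP => /andP [hy /imsetP [z hz ey]].
  move: hy hz; rewrite ey !inE; by have := hc z; case: ((z, b) \in S); case: ((up z, b) \in S).
have hU := cardsU Cc ((@up N) @: Cc). rewrite disj cards0 subn0 (card_imset _ (@up_inj N)) in hU.
have hm := max_card (Cc :|: (@up N) @: Cc). rewrite hU card_ord in hm.
have hC := cardsC R. rewrite card_ord in hC.
rewrite /Cc in hm; lia.
Qed.

Lemma lower (S : {set V}) : strong_resolving_set P S -> n * k.+1 <= #|S|.
Proof.
move=> /srs_cover hc. rewrite card_rows.
have -> : n * k.+1 = \sum_(b : 'I_n) k.+1 by rewrite sum_nat_const card_ord.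
apply: leq_sum => b _. exact: row_lb.
Qed.

Definition cd (u : V) : nat := if u.2 <= u.1 then u.1 - u.2 else u.1 + n - u.2.

Lemma cdV (u : V) : (u.2 <= u.1 /\ cd u = u.1 - u.2) \/ (u.1 < u.2 /\ cd u = u.1 + n - u.2).
Proof. rewrite /cd; case: leqP; lia. Qed.

Definition S0 : {set V} := [set u | ~~ odd (cd u)].

Lemma S0_cover (u w : V) : u \notin S0 -> tadj u w -> w \in S0.
Proof.
rewrite !inE negbK; case: u w => [x1 x2] [y1 y2] hu.
have := cdV (x1, x2); have := cdV (y1, y2); rewrite /= => c2 c1.
have := ltn_ord x1; have := ltn_ord x2; have := ltn_ord y1; have := ltn_ord y2.
rewrite /tadj /= => l1 l2 l3 l4.
case/orP => /andP [/eqP /(congr1 (@nat_of_ord _)) e /orP [/eqP e2|/eqP e2]].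
- have := upV x1; rewrite -e2 => v; lia.
- have := upV y1; rewrite -e2 => v; lia.
- have := upV x2; rewrite -e2 => v; lia.
- have := upV y2; rewrite -e2 => v; lia.
Qed.

Lemma S0_srs : strong_resolving_set P S0.
Proof.
apply/forallP => u; apply/forallP => v; apply/implyP => huv.
case: (boolP (u \in S0)) => hu.
  by apply/existsP; exists u; rewrite hu res_self1.
case: (boolP (v \in S0)) => hv.
  by apply/existsP; exists v; rewrite hv res_self2.
have [w [ht hi]] := key hk huv.
by apply/existsP; exists w; rewrite (S0_cover hu ht) /strongly_resolves hi.
Qed.

Lemma cd_lt (u : V) : cd u < n.
Proof. have := cdV u; have := ltn_ord u.1; have := ltn_ord u.2; lia. Qed.

Lemma card_S0 : #|S0| = n * k.+1.
Proof.
rewrite card_rows.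
have -> : n * k.+1 = \sum_(b : 'I_n) k.+1 by rewrite sum_nat_const card_ord.
apply: eq_bigr => b _.
pose f := fun x : 'I_n => (inord (cd (x, b)) : 'I_n).
have finj : injective f.
  move=> x y /(congr1 (@nat_of_ord _)); rewrite /f !inordK ?cd_lt // => h.
  apply: val_inj => /=. move: h; have := cdV (x, b); have := cdV (y, b); rewrite /=.
  have := ltn_ord x; have := ltn_ord y; have := ltn_ord b; lia.
have -> : [set x | (x, b) \in S0] = f @^-1: [set i : 'I_n | ~~ odd i].
  by apply/setP => x; rewrite !inE /f inordK ?cd_lt.
by rewrite card_preimset // card_even.
Qed.

End K.


Theorem proposition31 (k : nat) (hk : 0 < k) :
  dim_s (direct_prod (cycle_graph k.*2.+1) (cycle_graph k.*2.+1))
  = k.*2.+1 * k.+1.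
Proof.
apply/eqP; rewrite eqn_leq; apply/andP; split.
- rewrite /dim_s -(card_S0 hk).
  apply: bigmin_leq_seq; [exact: mem_index_enum | exact: S0_srs hk].
- rewrite /dim_s. apply: (@big_ind nat (fun m : nat => k.*2.+1 * k.+1 <= m)).
  + rewrite cardV; nia.
  + by move=> x y hx hy; rewrite leq_min hx hy.
  + by move=> S hS; exact: lower hk S hS.
Qed.
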